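(* Consider the admission control model described in the context, with discount rate $\alpha>0$, and suppose: (i) $0\le \Delta d_{i+1}\le \Delta d_i$ for $1\le i\le n-1$, and $\Delta d_1>0$; (ii) $\Delta h_{i+1}\ge \Delta h_i\ge 0$ for $1\le i\le n-1$. Define $\nu_0=\Delta h_1/(\alpha+\Delta d_1)$ and, for $1\le j\le n-1$, $$\nu_j=\nu_{j-1}+\frac{\Delta h_{j+1}-\nu_{j-1}(\alpha+\Delta d_{j+1})}{\alpha+\Delta d_{j+1}+w^{S_{j+1}}_{j-1}/\rho_{j-1}}.$$ Then: (a) $\dfrac{\Delta h_j}{\alpha+\Delta d_j}\le \dfrac{\Delta h_{j+1}}{\alpha+\Delta d_{j+1}}$ for $1\le j\le n-1$; (b) $\nu_j\le \dfrac{\Delta h_{j+1}}{\alpha+\Delta d_{j+1}}$ for $0\le j\le n-1$; (c) $\nu_0\le\nu_1\le\cdots\le\nu_{n-1}$.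
   Context: Admission control model: a single-server queue whose number in system $L(t)\in\{0,1,\dots,n\}$ ($n\ge1$) evolves in continuous time; in state $i$ arrivals occur at rate $\lambda_i>0$ and services at rate $\mu_i>0$ ($1\le i\le n$), $\mu_0=0$. At each time the entry gate is shut ($a=1$, arrivals rejected) or open ($a=0$, arrivals admitted); in state $n$ it is always shut. Holding costs accrue at rate $h_i$ in state $i$; discount rate $\alpha>0$. For $S\subseteq\{0,\dots,n-1\}$, the $S$-active policy shuts the gate exactly in states $S\cup\{n\}$; $b^S_i=E_i[\int_0^\infty\lambda_{L(t)}a(t)e^{-\alpha t}dt]$ under it, starting from $i$. Marginal workloads: $w^S_i=\lambda_i[1-(b^S_{i+1}-b^S_i)]$, $0\le i\le n-1$. $S_k=\{k-1,\dots,n-1\}$ for $1\le k\le n$. Notation: $\Delta x_i=x_i-x_{i-1}$; $d_i=\mu_i-\lambda_i$ ($d_0=-\lambda_0$); $\rho_i=\lambda_i/\mu_{i+1}$. *)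

(* Defs.v *)
From HB Require Import structures.
From mathcomp Require Import all_boot all_order all_algebra.
Set Implicit Arguments. Unset Strict Implicit. Unset Printing Implicit Defensive.
Import Order.TTheory GRing.Theory Num.Theory.
Local Open Scope ring_scope.

Section AdmissionControl.
Variable R : realFieldType.
(* number of states is n+1 : {0,...,n} *)
Variable n : nat.
Variables (lam mu h : nat -> R).
Variable alpha : R.

Definition muz (i : nat) : R := if i == 0%N then 0 else mu i.

Definition dd (i : nat) : R := muz i - lam i.
Definition Dd (i : nat) : R := dd i - dd i.-1.
Definition Dh (i : nat) : R := h i - h i.-1.
Definition rho (i : nat) : R := lam i / mu i.+1.

(* a set S of states in {0,...,n-1} given as a boolean predicate on nat;
   the S-active policy shuts the gate exactly on S \cup {n} *)
Definition gate (S : pred nat) (i : nat) : R := ((S i && (i < n)%N) || (i == n))%:R.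

(* generator of the controlled birth-death chain on {0..n} under the
   S-active policy *)
Definition genQ (S : pred nat) : 'M[R]_n.+1 :=
  \matrix_(i, j)
    (if (j : nat) == (i : nat).+1 then lam i * (1 - gate S i)
     else if (j : nat).+1 == i then muz i
     else if (j : nat) == i then - (lam i * (1 - gate S i) + muz i)
     else 0).

Definition rew (S : pred nat) : 'cV[R]_n.+1 := \col_i (lam i * gate S i).

(* b^S_i = E_i[ int_0^oo lambda_{L(t)} a(t) e^{-alpha t} dt ]
        = ((alpha I - Q)^{-1} r)_i  (resolvent of the finite CTMC) *)
Definition bS (S : pred nat) (i : nat) : R :=
  (invmx (alpha%:M - genQ S) *m rew S) (inord i) 0.

Definition wS (S : pred nat) (i : nat) : R := lam i * (1 - (bS S i.+1 - bS S i)).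

Definition Sk (k : nat) : pred nat := fun i => (k.-1 <= i)%N && (i <= n.-1)%N.

Fixpoint nu (j : nat) : R :=
  match j with
  | 0 => Dh 1 / (alpha + Dd 1)
  | j'.+1 => nu j' + (Dh j.+1 - nu j' * (alpha + Dd j.+1))
                     / (alpha + Dd j.+1 + wS (Sk j.+1) j' / rho j')
  end.

End AdmissionControl.

(* Main.v *)
Require Import Defs.
From HB Require Import structures.
From mathcomp Require Import all_boot all_order all_algebra.
From mathcomp Require Import ring lra zify.
Import Order.TTheory GRing.Theory Num.Theory.
Local Open Scope ring_scope.

Lemma argmax_ex (R : realFieldType) (f : nat -> R) (a b : nat) :
  (a <= b)%N -> exists2 k, (a <= k <= b)%N & forall i, (a <= i <= b)%N -> f i <= f k.
Proof.
elim: b => [|b IH] hab.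
  exists a; first by rewrite hab leqnn.
  move=> i /andP[h1 h2]; have -> : i = a by lia.
  by [].
case: (leqP a b) => [hb|hb].
  have [k /andP[k1 k2] hk] := IH hb.
  case: (leP (f k) (f b.+1)) => hf.
    exists b.+1; first by rewrite hab leqnn.
    move=> i /andP[i1 i2]; rewrite leq_eqVlt in i2; case/orP: i2 => [/eqP->//|i2].
    by apply: le_trans hf; apply: hk; rewrite i1.
  exists k; first by rewrite k1 (leq_trans k2).
  move=> i /andP[i1 i2]; rewrite leq_eqVlt in i2; case/orP: i2 => [/eqP->|i2].
    exact: ltW.
  by apply: hk; rewrite i1.
exists b.+1; first by rewrite hab leqnn.
move=> i /andP[i1 i2]; have -> : i = b.+1 by lia.
by [].
Qed.

Lemma pt (R : realFieldType) (i j : nat) (L m x : R) : (i = 0%N -> m = 0) ->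
  (if j == i.+1 then L else if j.+1 == i then m else if j == i then -(L+m) else 0) * x =
  (if j == i.+1 then L*x else 0) + (if j == i.-1 then m*x else 0) + (if j == i then -(L+m)*x else 0).
Proof.
move=> hm.
case: (j =P i.+1) => [h1|h1]; case: (j.+1 =P i) => [h2|h2]; case: (j =P i.-1) => [h3|h3];
  case: (j =P i) => [h4|h4]; try lia; rewrite ?addr0 ?add0r //.
all: try (have -> : m = 0 by apply: hm; lia); rewrite ?mul0r ?addr0 //.
all: by rewrite ?mul0r ?add0r.
Qed.

Definition Lr {R : realFieldType} n (lam : nat -> R) S i := lam i * (1 - gate R n S i).

Lemma row_eq (R : realFieldType) n (lam mu : nat -> R) (alpha : R) S
  (c : 'cV[R]_n.+1) (i : 'I_n.+1) :
  ((alpha%:M - genQ n lam mu S) *m c) i 0 =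
  alpha * c (inord i) 0 - ((if (i < n)%N then Lr n lam S i * c (inord i.+1) 0 else 0)
     + muz mu i * c (inord i.-1) 0 - (Lr n lam S i + muz mu i) * c (inord i) 0).
Proof.
rewrite mulmxBl mul_scalar_mx !mxE inord_val; congr (_ - _).
pose x : nat -> R := fun k => c (inord k) 0.
transitivity (\sum_(j < n.+1)
  ((if (j : nat) == i.+1 then Lr n lam S i * x j else 0)
  + (if (j : nat) == i.-1 then muz mu i * x j else 0)
  + (if (j : nat) == i then - (Lr n lam S i + muz mu i) * x j else 0))).
  apply: eq_bigr => j _; rewrite !mxE /x inord_val.
  apply: pt => hi; rewrite /muz hi //.
rewrite !big_split /= -!big_mkcond /=.
rewrite (@big_ord1_eq R 0 +%R (fun j => Lr n lam S i * x j) i.+1 n.+1).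
rewrite (@big_ord1_eq R 0 +%R (fun j => muz mu i * x j) i.-1 n.+1).
rewrite (@big_ord1_eq R 0 +%R (fun j => - (Lr n lam S i + muz mu i) * x j) i n.+1).
rewrite ltnS (leq_ltn_trans (leq_pred _) (ltn_ord i)) (ltn_ord i) /x inord_val.
by rewrite mulNr; case: ifP => _; ring.
Qed.

Lemma maxprin (R : realFieldType) n (L M x : nat -> R) (alpha : R) : 0 < alpha ->
  (forall i, (i <= n)%N -> 0 <= L i) -> (forall i, (i <= n)%N -> 0 <= M i) ->
  (forall i, (i <= n)%N -> alpha * x i - ((if (i < n)%N then L i * x i.+1 else 0)
       + M i * x i.-1 - (L i + M i) * x i) = 0) ->
  forall i, (i <= n)%N -> x i <= 0.
Proof.
move=> ha hL hM he.
have [k /andP[_ kn] hk] := @argmax_ex R x 0 n (leq0n n).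
move=> i hi; apply: le_trans (hk i hi) _.
rewrite leNgt; apply/negP => xk.
have e := he k kn.
have h1 : (if (k < n)%N then L k * x k.+1 else 0) <= L k * x k.
  case: ifP => hkn.
    by apply: ler_wpM2l; [exact: hL | apply: hk; rewrite hkn].
  by apply: mulr_ge0; [exact: hL | exact: ltW].
have h2 : M k * x k.-1 <= M k * x k.
  apply: ler_wpM2l; first exact: hM.
  by apply: hk; rewrite leq0n /= (leq_trans (leq_pred _) kn).
have h3 : 0 < alpha * x k by apply: mulr_gt0.
lra.
Qed.

Lemma Lr_ge0 (R : realFieldType) n (lam : nat -> R) S i : 0 <= lam i -> 0 <= Lr n lam S i.
Proof.
move=> hl; rewrite /Lr /gate; apply: mulr_ge0 => //.
by case: (_ || _); rewrite /= ?subrr ?subr0 ?ler01.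
Qed.

Lemma muz_ge0 (R : realFieldType) n (mu : nat -> R) i :
  (forall i, (1 <= i <= n)%N -> 0 < mu i) -> (i <= n)%N -> 0 <= muz mu i.
Proof.
move=> hmu hi; rewrite /muz; case: eqP => // hi0.
by apply: ltW; apply: hmu; rewrite hi andbT lt0n; apply/eqP.
Qed.

Lemma kernel0 (R : realFieldType) n (lam mu : nat -> R) alpha S (c : 'cV[R]_n.+1) :
  (forall i, (i <= n)%N -> 0 < lam i) ->
  (forall i, (1 <= i <= n)%N -> 0 < mu i) -> 0 < alpha ->
  (alpha%:M - genQ n lam mu S) *m c = 0 -> forall i, (i <= n)%N -> c (inord i) 0 <= 0.
Proof.
move=> hl hmu ha hc.
apply: (@maxprin R n (Lr n lam S) (muz mu) (fun k => c (inord k) 0) alpha) => //.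
- by move=> i hi; apply: Lr_ge0; apply: ltW; apply: hl.
- by move=> i hi; apply: muz_ge0 hmu hi.
move=> i hi.
have := @row_eq R n lam mu alpha S c (inord i).
by rewrite hc mxE inordK // => <-.
Qed.

Lemma unitA (R : realFieldType) n (lam mu : nat -> R) alpha S :
  (forall i, (i <= n)%N -> 0 < lam i) ->
  (forall i, (1 <= i <= n)%N -> 0 < mu i) -> 0 < alpha ->
  (alpha%:M - genQ n lam mu S) \in unitmx.
Proof.
move=> hl hmu ha.
rewrite unitmxE unitfE -det_tr; apply/negP => /det0P [v vn0 hv].
have hc : (alpha%:M - genQ n lam mu S) *m v^T = 0.
  by apply: trmx_inj; rewrite trmx_mul trmxK hv trmx0.
have hc' : (alpha%:M - genQ n lam mu S) *m (- v^T) = 0 by rewrite mulmxN hc oppr0.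
have k1 := @kernel0 R n lam mu alpha S _ hl hmu ha hc.
have k2 := @kernel0 R n lam mu alpha S _ hl hmu ha hc'.
move/eqP: vn0; apply; apply/matrixP => a j; rewrite !mxE (ord1 a).
have := k1 j (leq_ord j); have := k2 j (leq_ord j).
rewrite !mxE inord_val; lra.
Qed.

Lemma bS_eq (R : realFieldType) n (lam mu : nat -> R) (alpha : R) S :
  (forall i, (i <= n)%N -> 0 < lam i) ->
  (forall i, (1 <= i <= n)%N -> 0 < mu i) -> 0 < alpha ->
  forall i, (i <= n)%N ->
  alpha * bS n lam mu alpha S i - ((if (i < n)%N then Lr n lam S i * bS n lam mu alpha S i.+1 else 0)
     + muz mu i * bS n lam mu alpha S i.-1 - (Lr n lam S i + muz mu i) * bS n lam mu alpha S i)
  = lam i * gate R n S i.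
Proof.
move=> hl hmu ha i hi.
have hu := @unitA R n lam mu alpha S hl hmu ha.
have := @row_eq R n lam mu alpha S (invmx (alpha%:M - genQ n lam mu S) *m rew n lam S) (inord i).
rewrite mulKVmx // inordK // /bS => <-.
by rewrite /rew mxE inordK.
Qed.

Lemma delta_le1 (R : realFieldType) n (lam mu : nat -> R) (alpha : R) m :
  (forall i, (i <= n)%N -> 0 < lam i) ->
  (forall i, (1 <= i <= n)%N -> 0 < mu i) -> 0 < alpha ->
  (1 <= m)%N -> (m < n)%N ->
  (forall k, (1 <= k <= m)%N -> 0 < alpha + Dd lam mu k) ->
  bS n lam mu alpha (Sk n m.+1) m - bS n lam mu alpha (Sk n m.+1) m.-1 <= 1.
Proof.
move=> hl hmu ha hm1 hmn hD.
set S := Sk n m.+1.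
pose b k := bS n lam mu alpha S k.
pose e k := b k - b k.-1.
have E := @bS_eq R n lam mu alpha S hl hmu ha.
have g0 : forall i, (i < m)%N -> gate R n S i = 0.
  move=> i hi; rewrite /gate /S /Sk /= leqNgt hi /=.
  by have -> : (i == n) = false by apply/eqP; lia.
have g1 : gate R n S m = 1.
  rewrite /gate /S /Sk /= leqnn /=.
  by rewrite hmn andbT; have -> : (m <= n.-1)%N by lia.
have Eo : forall i, (i < m)%N -> alpha * b i - (lam i * b i.+1 + muz mu i * b i.-1
    - (lam i + muz mu i) * b i) = 0.
  move=> i hi; have := E i (ltnW (ltn_trans hi hmn)).
  rewrite /Lr g0 // subr0 mulr1 mulr0.
  by have -> : (i < n)%N by lia.
have Em : alpha * b m - (muz mu m * b m.-1 - muz mu m * b m) = lam m.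
  have := E m (ltnW hmn); rewrite /Lr g1 subrr mulr0 mulr1 hmn mul0r.
  by rewrite add0r add0r.
have lamge : forall i, (i <= n)%N -> 0 <= lam i by move=> i hi; apply: ltW; apply: hl.
have muzge : forall i, (i <= n)%N -> 0 <= muz mu i by move=> i hi; apply: muz_ge0 hmu hi.
have [k /andP[k1 km] hk] := @argmax_ex R e 1 m hm1.
apply: le_trans (hk m _) _; first by rewrite hm1 leqnn.
rewrite leNgt; apply/negP => ek.
have hDk := hD k ltac:(lia).
have Ddk : Dd lam mu k = (muz mu k - lam k) - (muz mu k.-1 - lam k.-1) by [].
have hprev : muz mu k.-1 * e k.-1 <= muz mu k.-1 * e k.
  case: (k =P 1%N) => [->|k1'].
    by rewrite /muz /= !mul0r.
  apply: ler_wpM2l; first by apply: muzge; lia.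
  by apply: hk; apply/andP; split; lia.
have Ekm1 : alpha * b k.-1 - (lam k.-1 * b k + muz mu k.-1 * b k.-1.-1
    - (lam k.-1 + muz mu k.-1) * b k.-1) = 0.
  have := Eo k.-1 ltac:(lia).
  by have -> : k.-1.+1 = k by lia.
case: (ltngtP k m) => hkm; last first.
-
  subst k.
  have h1 : 0 < (alpha + Dd lam mu m + lam m) * (e m - 1).
    apply: mulr_gt0; last by rewrite subr_gt0.
    by apply: ltr_wpDr; [apply: lamge; lia | exact: hDk].
  move: h1 hprev Ekm1 Em; rewrite Ddk /e; lra.
- lia.
have Ek := Eo k hkm.
have hnext : lam k * e k.+1 <= lam k * e k.
  apply: ler_wpM2l; first by apply: lamge; lia.
  by apply: hk; apply/andP; split; lia.
have h1 : 0 < (alpha + Dd lam mu k) * e k.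
  by apply: mulr_gt0 => //; apply: lt_trans ek.
move: h1 hprev hnext Ek Ekm1; rewrite Ddk /e /=; lra.
Qed.
Lemma step {R : realFieldType} (x D c W : R) : 0 < c -> 0 <= W -> x <= D / c ->
  x <= x + (D - x * c) / (c + W) /\ x + (D - x * c) / (c + W) <= D / c.
Proof.
move=> hc hW hx.
have hy : 0 <= D - x * c by rewrite subr_ge0 -ler_pdivlMr.
have hcW : 0 < c + W by lra.
split; first by rewrite lerDl divr_ge0 // ltW.
have e : D / c = x + (D - x * c) / c by field; rewrite gt_eqF.
rewrite e lerD2l; apply: ler_wpM2l => //.
by rewrite lef_pV2 ?posrE //; lra.
Qed.

Theorem lemma7 (R : realFieldType) (n : nat) (lam mu h : nat -> R) (alpha : R)
  (hn : (1 <= n)%N)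
  (hlam : forall i, (i <= n)%N -> 0 < lam i)
  (hmu : forall i, (1 <= i <= n)%N -> 0 < mu i)
  (halpha : 0 < alpha)
  (hd : forall i, (1 <= i <= n.-1)%N ->
          0 <= Dd lam mu i.+1 /\ Dd lam mu i.+1 <= Dd lam mu i)
  (hd1 : 0 < Dd lam mu 1)
  (hh : forall i, (1 <= i <= n.-1)%N -> 0 <= Dh h i /\ Dh h i <= Dh h i.+1) :
  (forall j, (1 <= j <= n.-1)%N ->
     Dh h j / (alpha + Dd lam mu j) <= Dh h j.+1 / (alpha + Dd lam mu j.+1))
  /\ (forall j, (j <= n.-1)%N ->
     nu n lam mu h alpha j <= Dh h j.+1 / (alpha + Dd lam mu j.+1))
  /\ (forall j, (j.+1 <= n.-1)%N ->
     nu n lam mu h alpha j <= nu n lam mu h alpha j.+1).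
Proof.
have hDd : forall k, (1 <= k <= n)%N -> 0 <= Dd lam mu k.
  move=> k hk; case: (k =P 1%N) => [->|k1]; first exact: ltW.
  have := (hd k.-1 ltac:(lia)).1.
  by have -> : k.-1.+1 = k by lia.
have hc : forall k, (1 <= k <= n)%N -> 0 < alpha + Dd lam mu k.
  by move=> k hk; have := hDd k hk; lra.
have pa : forall j, (1 <= j <= n.-1)%N ->
     Dh h j / (alpha + Dd lam mu j) <= Dh h j.+1 / (alpha + Dd lam mu j.+1).
  move=> j hj; have [h0 h1] := hh j hj; have [d0 d1] := hd j hj.
  have c1 := hc j ltac:(lia); have c2 := hc j.+1 ltac:(lia).
  apply: (@le_trans _ _ (Dh h j / (alpha + Dd lam mu j.+1))).
    apply: ler_wpM2l => //; rewrite lef_pV2 ?posrE //; lra.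
  by apply: ler_wpM2r => //; rewrite invr_ge0 ltW.
have hW : forall j, (j.+1 <= n.-1)%N ->
    0 <= wS n lam mu alpha (Sk n j.+2) j / rho lam mu j.
  move=> j hj; apply: divr_ge0.
    rewrite /wS; apply: mulr_ge0; first by apply: ltW; apply: hlam; lia.
    have := @delta_le1 R n lam mu alpha j.+1 hlam hmu halpha ltac:(lia) ltac:(lia)
      ltac:(move=> k hk; apply: hc; lia).
    by rewrite /= subr_ge0.
  rewrite /rho; apply: divr_ge0; apply: ltW; [apply: hlam | apply: hmu]; lia.
have pb : forall j, (j <= n.-1)%N ->
     nu n lam mu h alpha j <= Dh h j.+1 / (alpha + Dd lam mu j.+1).
  elim=> [|j IH] hj; first by [].
  have hx : nu n lam mu h alpha j <= Dh h j.+2 / (alpha + Dd lam mu j.+2).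
    apply: le_trans (IH ltac:(lia)) _; apply: pa; lia.
  have := @step R _ _ _ _ (hc j.+2 ltac:(lia)) (hW j ltac:(lia)) hx.
  by case.
split; first exact: pa.
split; first exact: pb.
move=> j hj.
have hx : nu n lam mu h alpha j <= Dh h j.+2 / (alpha + Dd lam mu j.+2).
  apply: le_trans (pb j ltac:(lia)) _; apply: pa; lia.
have := @step R _ _ _ _ (hc j.+2 ltac:(lia)) (hW j ltac:(lia)) hx.
by case.
Qed.
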